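(* Assume the setting in the context, with $0<\lambda<\eta<1$. Then $\lim_{k\to\infty}\|z_k\|=0$.
   Context: Let $g:\mathbb{R}^n\to\mathbb{R}$, $h:\mathbb{R}^n\times\mathbb{R}^d\to\mathbb{R}$ satisfy: (A1) $h$ is twice differentiable in $x$, for each $\theta$ there are $0<\mu(\theta)\le L(\theta)$ with $\mu(\theta)I\preceq\nabla_x^2h(x,\theta)\preceq L(\theta)I$ for all $x$, and $\nabla_xh,\nabla^2_xh$ are continuous in $\theta$; (A2) $\nabla_x^2h$ is $L_H$-Lipschitz in $x$ and $\nabla^2_{x\theta}h$ is $L_J$-Lipschitz in $x$, uniformly in $\theta$. Let $\hat{x}(\theta)=\arg\min_xh(x,\theta)$, $f(\theta)=g(\hat{x}(\theta))$. (B) $f$ is continuously differentiable with $L_{\nabla f}$-Lipschitz gradient, $g$ continuously differentiable with $L_{\nabla g}$-Lipschitz gradient, $L_{\nabla f},L_{\nabla g}>0$, $g$ bounded below. Fix $\beta_0>0$, $0<\underline{\rho}<1<\overline{\rho}$, $\lambda<\eta$. Consider sequences $\theta_k\in\mathbb{R}^d$, $z_k\in\mathbb{R}^d\setminus\{0\}$, $\epsilon_k\ge0$, $\tilde{x}_k\in\mathbb{R}^n$ with $\|\tilde{x}_k-\hat{x}(\theta_k)\|\le\epsilon_k$, $\alpha_k,\beta_k>0$, with $\theta_{k+1}=\theta_k-\alpha_kz_k$ and $\|z_k-\nabla f(\theta_k)\|\le(1-\eta)\|z_k\|$ for all $k$. Set $w_k=\|\nabla g(\tilde{x}_k)\|+\|\nabla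 g(\tilde{x}_{k+1})\|$, $\bar{\epsilon}_k=\max\{\epsilon_k,\epsilon_{k+1}\}$, $\hat{s}_k=\sqrt{(\eta-\lambda)^2-4L_{\nabla f}(w_k\bar{\epsilon}_k+L_{\nabla g}\bar{\epsilon}_k^2)/\|z_k\|^2}$ (assumed real), $\underline{\alpha}_k=(\eta-\lambda-\hat{s}_k)/L_{\nabla f}$, $\overline{\alpha}_k=(\eta-\lambda+\hat{s}_k)/L_{\nabla f}$. Assume for every $k$: $\alpha_k=\underline{\rho}^{i_k}\beta_k$ where $i_k$ is the smallest nonnegative integer with $\underline{\rho}^{i_k}\beta_k\in[\underline{\alpha}_k,\overline{\alpha}_k]$; if $i_k>0$ then $\alpha_k>\underline{\rho}\,\overline{\alpha}_k$; and $\beta_{k+1}=\overline{\rho}\alpha_k$. *)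

(* Defs.v *)
From mathcomp Require Import all_boot all_order all_algebra.
From mathcomp Require Import all_classical all_reals all_analysis.
Import Order.TTheory GRing.Theory Num.Theory.
Import numFieldNormedType.Exports.
Set Implicit Arguments. Unset Strict Implicit. Unset Printing Implicit Defensive.
Local Open Scope ring_scope.

Section Defs.
Context {R : realType}.

Definition enorm {n : nat} (v : 'rV[R]_n) : R := Num.sqrt (\sum_i (v 0 i) ^+ 2).
Definition dotv {n : nat} (u v : 'rV[R]_n) : R := \sum_i u 0 i * v 0 i.
Definition ebasis {n : nat} (i : 'I_n) : 'rV[R]_n := delta_mx 0 i.

(* action of an m x k matrix on a vector of R^k (as row vectors): A w *)
Definition mxop {m k : nat} (A : 'M[R]_(m, k)) (w : 'rV[R]_k) : 'rV[R]_m := w *m A^T.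

Definition grad {n : nat} (f : 'rV[R]_n -> R) (x : 'rV[R]_n) : 'rV[R]_n :=
  \row_i ('D_(ebasis i) f x).
Definition hess {n : nat} (f : 'rV[R]_n -> R) (x : 'rV[R]_n) : 'M[R]_n :=
  \matrix_(i, j) ('D_(ebasis j) (fun y => 'D_(ebasis i) f y) x).

Definition gradx {n d : nat} (h : 'rV[R]_n -> 'rV[R]_d -> R) x t : 'rV[R]_n :=
  grad (fun y => h y t) x.
Definition hessxx {n d : nat} (h : 'rV[R]_n -> 'rV[R]_d -> R) x t : 'M[R]_n :=
  hess (fun y => h y t) x.
Definition hessxt {n d : nat} (h : 'rV[R]_n -> 'rV[R]_d -> R) x t : 'M[R]_(n, d) :=
  \matrix_(i, j) ('D_(ebasis j) (fun s => 'D_(ebasis i) (fun y => h y s) x) t).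

Definition assumption_A1 {n d : nat} (h : 'rV[R]_n -> 'rV[R]_d -> R) : Prop :=
  (forall t x, differentiable (fun y => h y t) x /\
               differentiable (fun y => gradx h y t) x) /\
  (* mu(theta) I <= Hessian <= L(theta) I  (Loewner order) *)
  (forall t, exists mu L : R, 0 < mu /\ mu <= L /\
     forall x v, mu * enorm v ^+ 2 <= dotv v (mxop (hessxx h x t) v)
                 /\ dotv v (mxop (hessxx h x t) v) <= L * enorm v ^+ 2) /\
  (forall x, continuous (fun t => gradx h x t)) /\
  (forall x, continuous (fun t => hessxx h x t)).

(* (A2): Lipschitz in x (w.r.t. the operator norm induced by the Euclidean
   norms), uniformly in theta *)
Definition assumption_A2 {n d : nat} (h : 'rV[R]_n -> 'rV[R]_d -> R)
    (LH LJ : R) : Prop :=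
  (forall t x y (v : 'rV[R]_n),
     enorm (mxop (hessxx h x t - hessxx h y t) v) <= LH * enorm (x - y) * enorm v) /\
  (forall x t, differentiable (fun s => gradx h x s) t) /\
  (forall t x y (w : 'rV[R]_d),
     enorm (mxop (hessxt h x t - hessxt h y t) w) <= LJ * enorm (x - y) * enorm w).

Definition C1_lipgrad {m : nat} (f : 'rV[R]_m -> R) (Lf : R) : Prop :=
  (forall x, differentiable f x) /\ continuous (grad f) /\
  (forall x y, enorm (grad f x - grad f y) <= Lf * enorm (x - y)).

(* xhat theta is a (hence, under A1, the unique) minimizer of h(., theta) *)
Definition is_argmin_map {n d : nat} (h : 'rV[R]_n -> 'rV[R]_d -> R)
    (xhat : 'rV[R]_d -> 'rV[R]_n) : Prop :=
  forall t x, h (xhat t) t <= h x t.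

End Defs.

(* Main.v *)
Require Import Defs.
From mathcomp Require Import all_boot all_order all_algebra.
From mathcomp Require Import all_classical all_reals all_analysis.
From mathcomp Require Import ring lra.
Import Order.TTheory GRing.Theory Num.Theory.
Import numFieldNormedType.Exports.
Local Open Scope classical_set_scope.
Local Open Scope ring_scope.

Section Aux.
Context {R : realType} {d : nat}.
Implicit Types u v : 'rV[R]_d.

Lemma sumsq_ge0 v : 0 <= \sum_i (v 0 i) ^+ 2.
Proof. by apply: sumr_ge0 => i _; apply: sqr_ge0. Qed.

Lemma enorm_ge0 v : 0 <= enorm v.
Proof. exact: sqrtr_ge0. Qed.

Lemma enorm_sq v : enorm v ^+ 2 = dotv v v.
Proof.
rewrite /enorm sqr_sqrtr; last exact: sumsq_ge0.
rewrite /dotv.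
by apply: eq_bigr => i _; rewrite expr2.
Qed.

Lemma dotvC u v : dotv u v = dotv v u.
Proof. by apply: eq_bigr => i _; rewrite mulrC. Qed.

Lemma dotvBl u u' v : dotv (u - u') v = dotv u v - dotv u' v.
Proof.
rewrite /dotv -sumrB; apply: eq_bigr => i _.
by rewrite !mxE mulrBl.
Qed.

Lemma dotvZr c u v : dotv u (c *: v) = c * dotv u v.
Proof.
rewrite /dotv mulr_sumr; apply: eq_bigr => i _.
by rewrite !mxE mulrCA.
Qed.

Lemma enormZ c v : enorm (c *: v) = `|c| * enorm v.
Proof.
rewrite /enorm -sqrtr_sqr -sqrtrM ?sqr_ge0 //; congr Num.sqrt.
rewrite mulr_sumr; apply: eq_bigr => i _.
by rewrite !mxE exprMn.
Qed.

Lemma enorm0_eq {v : 'rV[R]_d} : enorm v = 0 -> forall i, v 0 i = 0.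
Proof.
move=> /eqP; rewrite /enorm sqrtr_eq0 => H.
have H0 : \sum_i (v 0 i) ^+ 2 = 0.
  by apply/eqP; rewrite eq_le H sumsq_ge0.
move=> i; apply/eqP; rewrite -sqrf_eq0; apply/eqP.
move/eqP: H0; rewrite psumr_eq0; last by move=> j _; apply: sqr_ge0.
by move=> /allP /(_ i (mem_index_enum _)) /implyP /(_ isT) /eqP.
Qed.

Lemma cauchy_schwarz u v : dotv u v <= enorm u * enorm v.
Proof.
have [A0|Apos] := eqVneq (enorm u) 0.
  rewrite A0 mul0r /dotv big1 // => i _.
  by rewrite (enorm0_eq A0) mul0r.
have [B0|Bpos] := eqVneq (enorm v) 0.
  rewrite B0 mulr0 /dotv big1 // => i _.
  by rewrite (enorm0_eq B0) mulr0.
set A := enorm u; set B := enorm v.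
have A0 : 0 < A by rewrite lt_def Apos enorm_ge0.
have B0 : 0 < B by rewrite lt_def Bpos enorm_ge0.
have key : 0 <= \sum_i (B * u 0 i - A * v 0 i) ^+ 2.
  by apply: sumr_ge0 => i _; apply: sqr_ge0.
have E : \sum_i (B * u 0 i - A * v 0 i) ^+ 2
   = B ^+ 2 * dotv u u - 2 * (A * B) * dotv u v + A ^+ 2 * dotv v v.
  rewrite /dotv !mulr_sumr -!sumrB -big_split /=; apply: eq_bigr => i _.
  by ring.
rewrite E -!enorm_sq -/A -/B in key.
have : 0 <= 2 * (A * B) * (A * B - dotv u v).
  by rewrite (le_trans key) // le_eqVlt; apply/orP; left; apply/eqP; ring.
rewrite pmulr_rge0 ?subr_ge0 //.
by rewrite mulr_gt0 // mulr_gt0.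
Qed.


Lemma derive_grad (f : 'rV[R]_d -> R) x v :
  differentiable f x -> 'D_v f x = dotv (grad f x) v.
Proof.
move=> df; rewrite deriveE //.
rewrite [X in 'd f x X](row_sum_delta v) linear_sum /dotv.
apply: eq_bigr => i _.
by rewrite linearZ /= mxE -deriveE // mulrC.
Qed.

Lemma phi_is_derive (f : 'rV[R]_d -> R) x v t :
  differentiable f (x + t *: v) ->
  is_derive t 1 (fun s : R => f (x + s *: v)) (dotv (grad f (x + t *: v)) v).
Proof.
move=> df.
have E : (fun h : R => h^-1 *: (((fun s => f (x + s *: v)) \o shift t) (h *: 1)
             - f (x + t *: v)))
       = (fun h : R => h^-1 *: ((f \o shift (x + t *: v)) (h *: v) - f (x + t *: v))).
  apply/funext => h /=; congr (_ *: (f _ - _)).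
  by rewrite -[h *: 1]/(h * 1) mulr1 scalerDl addrCA.
split.
  by have := @diff_derivable _ _ _ _ _ v df; rewrite /derivable -E.
by rewrite /derive E -/(derive f _ v) derive_grad.
Qed.

Lemma descent (f : 'rV[R]_d -> R) L x y :
  (forall z, differentiable f z) ->
  (forall a b, enorm (grad f a - grad f b) <= L * enorm (a - b)) ->
  f y <= f x + dotv (grad f x) (y - x) + L / 2 * enorm (y - x) ^+ 2.
Proof.
move=> df lip.
set v := y - x; set c := dotv (grad f x) v; set K := L / 2 * enorm v ^+ 2.
pose phi := fun s : R => f (x + s *: v).
pose G : R -> R := phi - (c \*: (@id R)) - (K \*: ((@id R) * (@id R))).
have HG : forall s : R, is_derive s (1 : R) (G : R -> R)
    (dotv (grad f (x + s *: v)) v - c *: (1 : R) - K *: (s *: (1 : R) + s *: (1 : R))).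
  move=> s.
  have P1 : is_derive s (1:R) phi (dotv (grad f (x + s *: v)) v) := @phi_is_derive f x v s (df _).
  have I0 : is_derive s (1:R) (@id R) (1:R) := is_derive_id s 1.
  have I1 : is_derive s (1:R) (c \*: (@id R)) (c *: (1:R)) := is_deriveZ c I0.
  have I2 : is_derive s (1:R) ((@id R) * (@id R)) (s *: (1:R) + s *: (1:R)) := is_deriveM I0 I0.
  have I3 : is_derive s (1:R) (K \*: ((@id R) * (@id R))) (K *: (s *: (1:R) + s *: (1:R))) := is_deriveZ K I2.
  exact: (is_deriveB (is_deriveB P1 I1) I3).
have Gc : {within `[0, 1], continuous G}.
  apply: continuous_subspaceT => s.
  apply: differentiable_continuous; apply/derivable1_diffP.
  exact: (@ex_derive _ _ _ _ _ _ _ (HG s)).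
have [s s01 Hs] := MVT ltr01 (fun s _ => HG s) Gc.
move: s01; rewrite in_itv /= => /andP [s0 s1].
have key : dotv (grad f (x + s *: v)) v - c <= L * s * enorm v ^+ 2.
  rewrite /c -dotvBl.
  apply: (le_trans (cauchy_schwarz _ _)).
  apply: (le_trans (ler_wpM2r (enorm_ge0 v) (lip _ _))).
  have -> : x + s *: v - x = s *: v by rewrite addrC addKr.
  rewrite enormZ (ger0_norm (ltW s0)).
  by rewrite le_eqVlt; apply/orP; left; apply/eqP; ring.
move: Hs.
rewrite (_ : G 1 = f (x + 1 *: v) - c * 1 - K * (1 * 1)) //.
rewrite (_ : G 0 = f (x + 0 *: v) - c * 0 - K * (0 * 0)) //.
rewrite (_ : c%:A = c * 1) // (_ : s%:A = s * 1) //.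
rewrite (_ : K *: (s * 1 + s * 1) = K * (s * 1 + s * 1)) //.
rewrite scale1r scale0r addr0.
have -> : x + v = y by rewrite /v addrC subrK.
have HK : K * (s * 1 + s * 1) = L * s * enorm v ^+ 2 by rewrite /K; field.
rewrite HK => E.
have : f y - c - K - f x <= 0.
  have -> : f y - c - K - f x = f y - c * 1 - K * (1 * 1) - (f x - c * 0 - K * (0 * 0)).
    by ring.
  rewrite E; lra.
lra.
Qed.

End Aux.
Theorem theorem3p15 (R : realType) (n d : nat)
  (g : 'rV[R]_n -> R) (h : 'rV[R]_n -> 'rV[R]_d -> R)
  (xhat : 'rV[R]_d -> 'rV[R]_n) (LH LJ Lf Lg : R)
  (beta0 rho_lo rho_hi lam eta : R)
  (theta z : nat -> 'rV[R]_d) (eps : nat -> R) (xt : nat -> 'rV[R]_n)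
  (alpha beta : nat -> R) :
  (* (A1), (A2) *)
  assumption_A1 h -> assumption_A2 h LH LJ ->
  is_argmin_map h xhat ->
  (* (B), with f = g o xhat *)
  C1_lipgrad (fun t => g (xhat t)) Lf -> C1_lipgrad g Lg ->
  0 < Lf -> 0 < Lg ->
  (exists m : R, forall x, m <= g x) ->
  (* parameters *)
  0 < beta0 -> 0 < rho_lo -> rho_lo < 1 -> 1 < rho_hi ->
  0 < lam -> lam < eta -> eta < 1 ->
  (* sequences *)
  (forall k, z k != 0) ->
  (forall k, 0 <= eps k) ->
  (forall k, enorm (xt k - xhat (theta k)) <= eps k) ->
  (forall k, 0 < alpha k) -> (forall k, 0 < beta k) ->
  beta 0%N = beta0 ->
  (forall k, theta k.+1 = theta k - alpha k *: z k) ->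
  (forall k, enorm (z k - grad (fun t => g (xhat t)) (theta k))
               <= (1 - eta) * enorm (z k)) ->
  let w k := enorm (grad g (xt k)) + enorm (grad g (xt k.+1)) in
  let ebar k := Num.max (eps k) (eps k.+1) in
  let disc k := (eta - lam) ^+ 2
      - 4 * Lf * (w k * ebar k + Lg * ebar k ^+ 2) / enorm (z k) ^+ 2 in
  let shat k := Num.sqrt (disc k) in
  let alo k := (eta - lam - shat k) / Lf in
  let ahi k := (eta - lam + shat k) / Lf in
  (* shat_k is assumed real *)
  (forall k, 0 <= disc k) ->
  (* backtracking rule *)
  (forall k, exists i : nat,
     [/\ alpha k = rho_lo ^+ i * beta k,
         alo k <= rho_lo ^+ i * beta k <= ahi k,
         (forall j : nat, (j < i)%N ->
            ~ (alo k <= rho_lo ^+ j * beta k <= ahi k)) &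
         ((0 < i)%N -> rho_lo * ahi k < alpha k)]) ->
  (forall k, beta k.+1 = rho_hi * alpha k) ->
  (fun k => enorm (z k)) @ \oo --> (0 : R).
Proof.
move=> A1 A2 Hxhat HF HG Lf0 Lg0 Hm0 b0 rl0 rl1 rh1
  l0 le el1 z0 eps0 Hxt a0 bpos Hb0 Hth Hz w ebar disc shat alo ahi Hdisc Hbt Hbeta.
have [dF [cF lipF]] := HF.
have [m Hm] := Hm0.
set F := fun t => g (xhat t).
have el0 : 0 < eta - lam by rewrite subr_gt0.
have sh0 k : 0 <= shat k by apply: sqrtr_ge0.
have sh1 k : shat k <= eta - lam.
  have hw : 0 <= w k by apply: addr_ge0; apply: enorm_ge0.
  have he : 0 <= ebar k by rewrite /ebar le_max eps0.
  have hz : 0 < enorm (z k) ^+ 2.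
    rewrite exprn_gt0 // lt_def enorm_ge0 andbT; apply/eqP => /enorm0_eq H.
    by move: (z0 k) => /eqP; apply; apply/rowP => i; rewrite H mxE.
  have ht : 0 <= 4 * Lf * (w k * ebar k + Lg * ebar k ^+ 2) / enorm (z k) ^+ 2.
    apply: divr_ge0; last exact: ltW.
    apply: mulr_ge0; first by apply: mulr_ge0 => //; apply: ltW.
    by apply: addr_ge0; apply: mulr_ge0 => //; [apply: ltW | apply: sqr_ge0].
  have hd : disc k <= (eta - lam) ^+ 2 by rewrite /disc; lra.
  have hs : shat k ^+ 2 = disc k by rewrite /shat sqr_sqrtr.
  have := sh0 k; nra.
have q0 : 0 < Lf^-1 by rewrite invr_gt0.
have Lq : Lf * Lf^-1 = 1 by rewrite divff // gt_eqF.
have aup k : Lf * alpha k <= 2 * (eta - lam).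
  have [i [Ha /andP [_ Hi] _ _]] := Hbt k.
  have : Lf * alpha k <= Lf * ahi k by rewrite Ha; apply: ler_wpM2l => //; apply: ltW.
  have -> : Lf * ahi k = eta - lam + shat k.
    by rewrite /ahi mulrC -mulrA mulVf ?mulr1 // gt_eqF.
  have := sh1 k; lra.
pose amin := Num.min (alpha 0%N) (rho_lo * (eta - lam) / Lf).
have amin0 : 0 < amin by rewrite lt_min a0 /= divr_gt0 // mulr_gt0.
have alow k : amin <= alpha k.
  elim: k => [|k IH]; first by rewrite /amin ge_min lexx.
  have [i [Ha Hin Hmin Hpos]] := Hbt k.+1.
  case: i Ha Hin Hmin Hpos => [|i] Ha Hin Hmin Hpos.
    rewrite Ha expr0 mul1r Hbeta; apply: (le_trans IH).
    have := a0 k; nra.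
  have := Hpos isT => H.
  apply: le_trans (ltW H).
  rewrite /amin ge_min; apply/orP; right.
  have E : rho_lo * ahi k.+1 - rho_lo * (eta - lam) / Lf = rho_lo * shat k.+1 * Lf^-1.
    by rewrite /ahi; ring.
  have : 0 <= rho_lo * shat k.+1 * Lf^-1.
    by apply: mulr_ge0; [apply: mulr_ge0; [apply: ltW|]|apply: ltW].
  lra.
pose u k := enorm (z k) ^+ 2.
have u0 k : 0 <= u k by apply: sqr_ge0.
have desc k : F (theta k.+1) <= F (theta k) - lam * alpha k * u k.
  have D := @descent _ _ F Lf (theta k) (theta k.+1) dF lipF.
  move: D; have -> : theta k.+1 - theta k = (- alpha k) *: z k.
    by rewrite Hth scaleNr addrAC subrr add0r.
  rewrite dotvZr enormZ normrN ger0_norm; last exact: ltW.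
  have HD : eta * u k <= dotv (grad F (theta k)) (z k).
    have E1 : dotv (grad F (theta k)) (z k) = u k - dotv (z k - grad F (theta k)) (z k).
      by rewrite dotvBl /u enorm_sq; ring.
    rewrite E1.
    have CS := cauchy_schwarz (z k - grad F (theta k)) (z k).
    have := ler_wpM2r (enorm_ge0 (z k)) (Hz k).
    have := enorm_ge0 (z k).
    rewrite /u; nra.
  have := aup k; have := a0 k; have := u0 k.
  rewrite -/(u k) in HD *.
  move=> H1 H2 H3 H4.
  have P1 : 0 <= alpha k * (dotv (grad F (theta k)) (z k) - eta * u k).
    by apply: mulr_ge0; [apply: ltW | rewrite subr_ge0].
  have P2 : 0 <= alpha k * u k * (2 * (eta - lam) - Lf * alpha k).
    by apply: mulr_ge0; [apply: mulr_ge0; [apply: ltW|] | rewrite subr_ge0].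
  rewrite /u exprMn -/(u k) in H4.
  nra.
have Fm k : m <= F (theta k) by apply: Hm.
have sumb k : lam * amin * (\sum_(0 <= j < k) u j) <= F (theta 0%N) - F (theta k).
  elim: k => [|k IH]; first by rewrite big_geq // mulr0 subrr.
  rewrite big_nat_recr //= mulrDr.
  have := desc k; have := alow k; have := u0 k.
  move=> H1 H2 H3.
  have : lam * amin * u k <= lam * alpha k * u k.
    by apply: ler_wpM2r => //; apply: ler_wpM2l => //; apply: ltW.
  lra.
have cvs : cvgn (series u).
  apply: nondecreasing_is_cvgn; first exact: nondecreasing_series.
  exists ((F (theta 0%N) - m) / (lam * amin)) => _ [k _ <-].
  rewrite /series /= ler_pdivlMr; last by apply: mulr_gt0.
  have := sumb k; have := Fm k; lra.
have u_to0 := cvg_series_cvg_0 cvs.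
have -> : (fun k => enorm (z k)) = Num.sqrt \o u.
  apply/funext => k /=; rewrite /u sqrtr_sqr ger0_norm //; exact: enorm_ge0.
rewrite -sqrtr0; apply: (cvg_comp _ _ u_to0).
exact: sqrt_continuous.
Qed.
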